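(* Let $(\zeta_t)_{t\ge0}$ be the multi-species ASEP with one open boundary on $[N]$ described in the context, started from an arbitrary configuration in $\{1,2,3,\infty\}^N$. Let $\bar\zeta_t\in\{0,1\}^N$ be defined by $\bar\zeta_t(x)=1$ if $\zeta_t(x)\in\{1,2\}$ and $\bar\zeta_t(x)=0$ if $\zeta_t(x)\in\{3,\infty\}$. Then $(\bar\zeta_t)_{t\ge0}$ has the law of an ASEP with one open boundary on $[N]$ with parameters $q,\alpha,\gamma$.
   Context: Parameters: $q\in(0,1)$, $\alpha>\gamma>0$. The ASEP with one open boundary on $[N]$ is the Markov chain on $\{0,1\}^N$ in which a particle at $x$ jumps to $x+1$ at rate $1$ and to $x-1$ at rate $q$, provided the target is a vacant site in $[N]$. In addition, a particle is created at site $1$ at rate $\alpha$ if site $1$ is vacant, and removed at rate $\gamma$ if site $1$ is occupied. Multi-species ASEP: the state space is $\{1,2,3,\infty\}^N$, with total order $1>_p2>_p3>_p\infty$ (values $1,2,3$ are first, second and third class particles, $\infty$ a hole). Each edge $\{x,x+1\}$, $x\in[N-1]$, carries independent rate-$1$ and rate-$q$ Poisson clocks. When the rate-$1$ clock rings, the two values on the edge are sorted so that the $>_p$-larger value is at $x+1$. When the rate-$q$ clock rings, they are sorted so that the $>_p$-larger value is at $x$. Site $1$ carries a rate-$\alpha$ clock and a rate-$\gamma$ clock. When the rate-$\alpha$ clock rings, a value $\infty$ at site $1$ becomes $1$ and a value $3$ becomes $2$. When the rate-$\gamma$ clock rings, a value $1$ at site $1$ becomes $\infty$ and a value $2$ becomes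 $3$. Other values at site $1$ are unchanged. *)

(* Defs.v *)
From HB Require Import structures.
From mathcomp Require Import all_boot all_order all_algebra.
From mathcomp Require Import boolp classical_sets reals topology normedtype sequences.
Set Implicit Arguments. Unset Strict Implicit. Unset Printing Implicit Defensive.
Import Order.TTheory GRing.Theory Num.Theory.
Import numFieldNormedType.Exports.
Local Open Scope classical_set_scope.
Local Open Scope ring_scope.

Section CTMC.
Variables (R : realType) (S : finType).

(* Q-matrix built from jump rates r x y (the diagonal of r is ignored). *)
Definition generator (r : S -> S -> R) (x y : S) : R :=
  if x == y then - \sum_(z | z != x) r x z else r x y.

Definition kid (x y : S) : R := (x == y)%:R.
Definition kmul (A B : S -> S -> R) (x y : S) : R := \sum_(z : S) A x z * B z y.
Definition kpow (Q : S -> S -> R) (k : nat) : S -> S -> R := iter k (kmul Q) kid.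

Definition semigroup (Q : S -> S -> R) (t : R) (x y : S) : R :=
  lim ((fun m : nat => \sum_(k < m) (t ^+ k / (k`!)%:R) * kpow Q k x y) @ \oo).

(* Finite-dimensional distributions of f(X) for the chain X with generator Q:
   pfdd Q f x t0 [:: (t1,e1); ...; (tk,ek)]
     = P_x( f(X_{t1}) = e1, ..., f(X_{tk}) = ek )   when X_{t0} = x and t0 <= t1 <= ... <= tk,
   i.e. the sum over y1..yk with f yi = ei of the products of transition probabilities. *)
Fixpoint pfdd (T : eqType) (Q : S -> S -> R) (f : S -> T) (x : S) (t0 : R)
    (l : seq (R * T)) : R :=
  match l with
  | [::] => 1
  | (t, e) :: l' => \sum_(y : S | f y == e) semigroup Q (t - t0) x y * pfdd Q f y t l'
  end.
End CTMC.

(* ---------- configurations on [N] = {1,...,N}, N = n.+1, site k is index k-1 ---------- *)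
Section Configs.
Variables (n : nat) (T : Type).
Definition swap_sites (c : {ffun 'I_n.+1 -> T}) (i : nat) : {ffun 'I_n.+1 -> T} :=
  [ffun y : 'I_n.+1 => if val y == i then c (inord i.+1)
                      else if val y == i.+1 then c (inord i) else c y].
Definition set_site1 (c : {ffun 'I_n.+1 -> T}) (v : T) : {ffun 'I_n.+1 -> T} :=
  [ffun y : 'I_n.+1 => if val y == 0%N then v else c y].
End Configs.

(* state: {0,1}^N, true = particle *)
Definition asep_state (n : nat) := {ffun 'I_n.+1 -> bool}.

Definition asep_rate (R : realType) (n : nat) (q alpha gamma : R)
    (e e' : asep_state n) : R :=
  \sum_(i < n)
     ( ((e (inord i) && ~~ e (inord i.+1)) && (e' == swap_sites e i))%:R
     + q * ((e (inord i.+1) && ~~ e (inord i)) && (e' == swap_sites e i))%:R )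
  + alpha * (~~ e (inord 0) && (e' == set_site1 e true))%:R
  + gamma * (e (inord 0) && (e' == set_site1 e false))%:R.

Definition asep_gen (R : realType) (n : nat) (q alpha gamma : R) :=
  generator (@asep_rate R n q alpha gamma).

(* species coded by 'I_4: 0 = first class (1), 1 = second class (2),
   2 = third class (3), 3 = hole (infinity).  The order >_p is the reverse
   of the order of the codes: a is >_p-larger than b iff val a < val b. *)
Definition ms_state (n : nat) := {ffun 'I_n.+1 -> 'I_4}.

Definition pgt (a b : 'I_4) : bool := (val a < val b)%N.

(* rate-1 clock on edge {i+1,i+2}: put the >_p-larger value on the right *)
Definition sortR (n : nat) (z : ms_state n) (i : nat) : ms_state n :=
  if pgt (z (inord i)) (z (inord i.+1)) then swap_sites z i else z.
(* rate-q clock: put the >_p-larger value on the left *)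
Definition sortL (n : nat) (z : ms_state n) (i : nat) : ms_state n :=
  if pgt (z (inord i.+1)) (z (inord i)) then swap_sites z i else z.

Definition sp1 : 'I_4 := inord 0.
Definition sp2 : 'I_4 := inord 1.
Definition sp3 : 'I_4 := inord 2.
Definition spInf : 'I_4 := inord 3.

Definition ms_birth (n : nat) (z : ms_state n) : ms_state n :=
  if z (inord 0) == spInf then set_site1 z sp1
  else if z (inord 0) == sp3 then set_site1 z sp2 else z.
Definition ms_death (n : nat) (z : ms_state n) : ms_state n :=
  if z (inord 0) == sp1 then set_site1 z spInf
  else if z (inord 0) == sp2 then set_site1 z sp3 else z.

Definition ms_rate (R : realType) (n : nat) (q alpha gamma : R)
    (z z' : ms_state n) : R :=
  \sum_(i < n) ( (sortR z i == z')%:R + q * (sortL z i == z')%:R )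
  + alpha * (ms_birth z == z')%:R + gamma * (ms_death z == z')%:R.

Definition ms_gen (R : realType) (n : nat) (q alpha gamma : R) :=
  generator (@ms_rate R n q alpha gamma).

Definition proj (n : nat) (z : ms_state n) : asep_state n :=
  [ffun x => (val (z x) < 2)%N].

(* Main.v *)
Require Import Defs.
From HB Require Import structures.
From mathcomp Require Import all_boot all_order all_algebra.
From mathcomp Require Import boolp classical_sets reals topology normedtype sequences.
From Stdlib Require Import Lia.
From mathcomp Require Import zify.
Import Order.TTheory GRing.Theory Num.Theory.
Import numFieldNormedType.Exports.
Local Open Scope classical_set_scope.
Local Open Scope ring_scope.


Lemma gen_alt (R : realType) (S : finType) (r : S -> S -> R) x y :
  generator r x y = r x y - (x == y)%:R * \sum_z r x z.
Proof.
rewrite /generator; case: eqVneq => [<-|_]; last by rewrite mul0r subr0.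
by rewrite mul1r [in RHS](bigD1 x) //= opprD addrA subrr add0r.
Qed.

Section Lump.
Variables (R : realType) (S S' : finType) (f : S -> S').

Lemma sum_fiber_ind (w : S) e :
  \sum_(y | f y == e) ((w == y)%:R : R) = (f w == e)%:R.
Proof.
rewrite big_mkcond (bigD1 w) //= eqxx big1 ?addr0; first by case: ifP.
by move=> y /negbTE; rewrite eq_sym => ->; case: ifP.
Qed.

Lemma sum_by_fiber (g : S -> R) :
  \sum_z g z = \sum_(e : S') \sum_(z | f z == e) g z.
Proof. by rewrite (partition_big f xpredT) //. Qed.

Variables (r : S -> S -> R) (r' : S' -> S' -> R).
Hypothesis hl : forall x e, \sum_(y | f y == e) r x y = r' (f x) e.

Lemma lump_gen x e :
  \sum_(y | f y == e) generator r x y = generator r' (f x) e.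
Proof.
under eq_bigr do rewrite gen_alt.
rewrite sumrB hl gen_alt -mulr_suml sum_fiber_ind.
by rewrite (sum_by_fiber (r x)); under eq_bigr do rewrite hl.
Qed.

Lemma lump_kpow k x e :
  \sum_(y | f y == e) kpow r k x y = kpow r' k (f x) e.
Proof.
elim: k x e => [|k IH] x e /=; first exact: sum_fiber_ind.
rewrite /kmul exchange_big /=.
under eq_bigr do rewrite -mulr_sumr IH.
rewrite (sum_by_fiber (fun z => r x z * kpow r' k (f z) e)).
apply: eq_bigr => e' _.
under eq_bigr => z /eqP -> do []. 
by rewrite -mulr_suml hl.
Qed.
End Lump.


Section Conv.
Variables (R : realType) (S : finType) (Q : S -> S -> R).

Let M := \sum_x \sum_y `|Q x y|.

Lemma row_le x : \sum_z `|Q x z| <= M.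
Proof.
rewrite /M [in X in _ <= X](bigD1 x) //= lerDl; apply: sumr_ge0 => i _; apply: sumr_ge0 => *.
exact: normr_ge0.
Qed.

Lemma M_ge0 : 0 <= M.
Proof. by apply: sumr_ge0 => i _; apply: sumr_ge0 => *. Qed.

Lemma kpow_bound k x y : `|kpow Q k x y| <= M ^+ k.
Proof.
elim: k x y => [|k IH] x y /=.
  by rewrite /kid expr0; case: eqP; rewrite ?normr1 ?normr0.
rewrite /kmul exprS; apply: le_trans (ler_norm_sum _ _ _) _.
apply: le_trans (_ : \sum_z `|Q x z| * M ^+ k <= _).
  by apply: ler_sum => z _; rewrite normrM; apply: (ler_wpM2l (normr_ge0 _) (IH z y)).
rewrite -mulr_suml; apply: ler_wpM2r; [exact: exprn_ge0 M_ge0|exact: row_le].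
Qed.

Lemma semigroup_cvg t x y :
  cvgn (fun m : nat => \sum_(k < m) (t ^+ k / (k`!)%:R) * kpow Q k x y).
Proof.
set a := fun k : nat => (t ^+ k / (k`!)%:R) * kpow Q k x y.
have -> : (fun m : nat => \sum_(k < m) a k) = series a.
  by apply: funext => m; rewrite /series /= big_mkord.
apply: normed_cvg.
apply: (series_le_cvg _ _ _ (is_cvg_series_exp_coeff (`|t| * M))).
- by move=> k /=.
- move=> k /=; rewrite /exp_coeff /=; apply: divr_ge0; rewrite ?exprn_ge0 ?mulr_ge0 ?M_ge0 //.
- move=> k /=; rewrite /a /exp_coeff /= normrM normrM normfV normrX.
  rewrite [`|_%:R|]ger0_norm // exprMn mulrAC.
  apply: ler_wpM2r; first by rewrite invr_ge0.
  apply: ler_wpM2l; [exact: exprn_ge0 (normr_ge0 _) | exact: kpow_bound].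
Qed.
End Conv.

Lemma lim_bigsum (R : realType) (I : finType) (P : pred I) (g : I -> nat -> R) :
  (forall i, cvgn (g i)) ->
  lim ((fun m => \sum_(i | P i) g i m) @ \oo) = \sum_(i | P i) lim (g i @ \oo).
Proof.
move=> hc; apply: cvg_lim => //.
apply: (@cvg_big R I +%R 0 P add_continuous nat \oo (index_enum I) g (fun i => lim (g i @ \oo))) => //.
Qed.

Lemma lump_semigroup (R : realType) (S S' : finType) (f : S -> S')
  (r : S -> S -> R) (r' : S' -> S' -> R) :
  (forall x e, \sum_(y | f y == e) r x y = r' (f x) e) ->
  forall t x e, \sum_(y | f y == e) semigroup r t x y = semigroup r' t (f x) e.
Proof.
move=> hl t x e; rewrite /semigroup -(@lim_bigsum R S (fun y => f y == e) (fun y m => \sum_(k < m) t ^+ k / k`!%:R * kpow r k x y)); last by move=> i; exact: semigroup_cvg.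
apply: (congr1 (fun g : nat -> R => lim (g @ \oo))); apply: funext => m.
rewrite exchange_big /=; apply: eq_bigr => k _.
by rewrite -mulr_sumr (@lump_kpow _ _ _ _ _ _ hl).
Qed.

Set Implicit Arguments. Unset Strict Implicit.


Lemma vsp1 : val sp1 = 0%N. Proof. exact: inordK. Qed.
Lemma vsp2 : val sp2 = 1%N. Proof. exact: inordK. Qed.
Lemma vsp3 : val sp3 = 2%N. Proof. exact: inordK. Qed.
Lemma vspInf : val spInf = 3%N. Proof. exact: inordK. Qed.

Section Comb.
Variable n : nat.

Definition aR (e : asep_state n) i : asep_state n :=
  if e (inord i) && ~~ e (inord i.+1) then swap_sites e i else e.
Definition aL (e : asep_state n) i : asep_state n :=
  if e (inord i.+1) && ~~ e (inord i) then swap_sites e i else e.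
Definition abirth (e : asep_state n) : asep_state n :=
  if ~~ e (inord 0) then set_site1 e true else e.
Definition adeath (e : asep_state n) : asep_state n :=
  if e (inord 0) then set_site1 e false else e.

Lemma proj_swap (z : ms_state n) i : proj (swap_sites z i) = swap_sites (proj z) i.
Proof. by apply/ffunP => y; rewrite !ffunE; case: ifP => _ //; case: ifP. Qed.

Lemma proj_set1 (z : ms_state n) v : proj (set_site1 z v) = set_site1 (proj z) (val v < 2)%N.
Proof. by apply/ffunP => y; rewrite !ffunE; case: ifP; rewrite ?ffunE. Qed.

Lemma swap_id (T : Type) (c : {ffun 'I_n.+1 -> T}) i :
  c (inord i) = c (inord i.+1) -> swap_sites c i = c.
Proof.
move=> h; apply/ffunP => y; rewrite ffunE.
case: eqP => [e|_]; first by rewrite -e in h *; rewrite -h inord_val.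
by case: (@eqP _ (val y) i.+1) => [e|_] //; rewrite h -e inord_val.
Qed.

Lemma projE (z : ms_state n) x : proj z x = (val (z x) < 2)%N.
Proof. by rewrite ffunE. Qed.

Ltac fin_ord z i h1 h2 := rewrite ?swap_id ?projE //; move: h1 h2; move: (z (inord i)) (z (inord i.+1)) => [a ha] [b hb] /=; lia.

Lemma proj_sortR (z : ms_state n) i : proj (sortR z i) = aR (proj z) i.
Proof.
rewrite /sortR /aR /pgt !projE.
by case: ifP => h1; case: ifP => h2; rewrite ?proj_swap //; fin_ord z i h1 h2.
Qed.

Lemma proj_sortL (z : ms_state n) i : proj (sortL z i) = aL (proj z) i.
Proof.
rewrite /sortL /aL /pgt !projE.
by case: ifP => h1; case: ifP => h2; rewrite ?proj_swap //; fin_ord z i h1 h2.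
Qed.

Lemma proj_birth (z : ms_state n) : proj (ms_birth z) = abirth (proj z).
Proof.
rewrite /ms_birth /abirth projE.
case: (z (inord 0)) => a ha.
case: a ha => [|[|[|[|a]]]] ha //=; rewrite -!val_eqE /= ?vsp1 ?vsp2 ?vsp3 ?vspInf /= ?proj_set1 ?vsp1 ?vsp2 ?vsp3 ?vspInf //.
Qed.

Lemma proj_death (z : ms_state n) : proj (ms_death z) = adeath (proj z).
Proof.
rewrite /ms_death /adeath projE.
case: (z (inord 0)) => a ha.
case: a ha => [|[|[|[|a]]]] ha //=; rewrite -!val_eqE /= ?vsp1 ?vsp2 ?vsp3 ?vspInf /= ?proj_set1 ?vsp1 ?vsp2 ?vsp3 ?vspInf //.
Qed.
End Comb.

Definition ra' (R : realType) (n : nat) (q alpha gamma : R) (e e' : asep_state n) : R :=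
  \sum_(i < n) ((aR e i == e')%:R + q * (aL e i == e')%:R)
  + alpha * (abirth e == e')%:R + gamma * (adeath e == e')%:R.

Lemma ra'_eq (R : realType) (n : nat) (q alpha gamma : R) (e e' : asep_state n) :
  e != e' -> ra' q alpha gamma e e' = asep_rate q alpha gamma e e'.
Proof.
move=> ne; rewrite /ra' /asep_rate; congr (_ + _ + _).
- apply: eq_bigr => i _; congr (_ + _ * _).
    by rewrite /aR; case: ifP => _ /=; rewrite ?(negbTE ne) // eq_sym.
  by rewrite /aL; case: ifP => _ /=; rewrite ?(negbTE ne) // eq_sym.
- by rewrite /abirth; case: ifP => _ /=; rewrite ?(negbTE ne) // eq_sym.
- by rewrite /adeath; case: ifP => _ /=; rewrite ?(negbTE ne) // eq_sym.
Qed.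

Lemma gen_ra' (R : realType) (n : nat) (q alpha gamma : R) :
  asep_gen q alpha gamma = generator (@ra' R n q alpha gamma).
Proof.
apply: funext => x; apply: funext => y; rewrite /asep_gen /generator.
case: eqP => [_|/eqP ne]; last by rewrite ra'_eq.
by congr (- _); apply: eq_bigr => z hz; rewrite ra'_eq // eq_sym.
Qed.

Lemma fiber_ms (R : realType) (n : nat) (q alpha gamma : R) (z : ms_state n) e :
  \sum_(z' | proj z' == e) ms_rate q alpha gamma z z' = ra' q alpha gamma (proj z) e.
Proof.
rewrite /ms_rate /ra' !big_split /= exchange_big /=.
congr (_ + _ + _).
- rewrite -big_split /=; apply: eq_bigr => i _; rewrite big_split /= -!mulr_sumr.
  by rewrite !(@sum_fiber_ind R _ _ (@proj n)) proj_sortR proj_sortL.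
- by rewrite -mulr_sumr (@sum_fiber_ind R _ _ (@proj n)) proj_birth.
- by rewrite -mulr_sumr (@sum_fiber_ind R _ _ (@proj n)) proj_death.
Qed.


Lemma lump_main (R : realType) (n : nat) (q alpha gamma : R) t x e :
  \sum_(y | proj y == e) semigroup (ms_gen q alpha gamma) t x y
  = semigroup (asep_gen q alpha gamma) t (@proj n x) e.
Proof.
rewrite gen_ra'; apply: lump_semigroup => z e'.
exact: (@lump_gen R _ _ (@proj n) _ _ (@fiber_ms R n q alpha gamma)).
Qed.

Lemma pfdd_lump (R : realType) (n : nat) (q alpha gamma : R) (l : seq (R * asep_state n)) :
  forall (z : ms_state n) (t0 : R),
  pfdd (ms_gen q alpha gamma) (@proj n) z t0 l
  = pfdd (asep_gen q alpha gamma) id (proj z) t0 l.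
Proof.
elim: l => [|[t e] l IH] z t0 //=.
under eq_bigr => y /eqP hy do rewrite IH hy.
by rewrite -mulr_suml lump_main big_pred1_eq.
Qed.

Unset Implicit Arguments.

Theorem lemma2p1 (R : realType) (n : nat) (q alpha gamma : R)
    (hq0 : 0 < q) (hq1 : q < 1) (hg : 0 < gamma) (hag : gamma < alpha)
    (zeta0 : ms_state n) (l : seq (R * asep_state n)) :
  sorted (fun s t : R => s <= t) (0 :: map fst l) ->
  pfdd (ms_gen q alpha gamma) (@proj n) zeta0 0 l
  = pfdd (asep_gen q alpha gamma) id (proj zeta0) 0 l.
Proof.
move=> _; exact: pfdd_lump.
Qed.
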